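(* For every even positive integer $n$, letting $\frac{n}{2}\cdot K_2$ denote the perfect matching on $n$ vertices (the disjoint union of $n/2$ edges), $$\chi_{2K_2}\!\left(\tfrac{n}{2}\cdot K_2\right) = \left\lceil \sqrt{n + \tfrac14} + \tfrac12 \right\rceil.$$
   Context: All graphs are finite and simple. For a fixed bipartite graph $H$, a proper vertex coloring of a graph $G$ is called an $H$-avoiding coloring if for any two color classes, the subgraph of $G$ induced by their union contains no induced subgraph isomorphic to $H$. $\chi_H(G)$ denotes the minimum number of colors in an $H$-avoiding coloring of $G$. $2K_2$ is the disjoint union of two edges. *)

(* Defs.v *)
From HB Require Import structures.
From mathcomp Require Import all_boot all_order all_algebra.
From mathcomp Require Import reals.
Set Implicit Arguments. Unset Strict Implicit. Unset Printing Implicit Defensive.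
Import Order.TTheory GRing.Theory Num.Theory.

Definition has_induced_copy (W V : finType) (H : rel W) (G : rel V)
  (S : pred V) : Prop :=
  exists f : W -> V,
    injective f /\ (forall w, S (f w)) /\ (forall x y, G (f x) (f y) = H x y).

Definition proper_coloring (V : finType) (G : rel V) (k : nat) (c : V -> 'I_k)
  : Prop := forall x y, G x y -> c x != c y.

Definition H_avoiding_coloring (W V : finType) (H : rel W) (G : rel V)
  (k : nat) (c : V -> 'I_k) : Prop :=
  proper_coloring G c /\
  forall c1 c2 : 'I_k,
    ~ has_induced_copy H G (fun v => (c v == c1) || (c v == c2)).

Definition chi_H_is (W V : finType) (H : rel W) (G : rel V) (k : nat) : Prop :=
  (exists c : V -> 'I_k, H_avoiding_coloring H G c) /\
  (forall j, (exists c : V -> 'I_j, H_avoiding_coloring H G c) -> k <= j).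

Definition twoK2 : rel 'I_4 :=
  fun x y => (x != y) && ((val x)./2 == (val y)./2).

(* The perfect matching (n/2) K_2 on 'I_n : edges {2i, 2i+1}. *)
Definition matching_graph (n : nat) : rel 'I_n :=
  fun x y => (x != y) && ((val x)./2 == (val y)./2).
Arguments matching_graph n : clear implicits.

(* Main.v *)
Require Import Defs.
From HB Require Import structures.
From mathcomp Require Import all_boot all_order all_algebra.
From mathcomp Require Import reals.
Import Order.TTheory GRing.Theory Num.Theory.
From mathcomp Require Import zify lra.
Section M.
Variables (n : nat) (Hn : ~~ odd n).

Definition pv (v : nat) := if odd v then v.-1 else v.+1.

Lemma pv_lt (v : 'I_n) : pv v < n.
Proof. have := ltn_ord v; rewrite /pv; case: ifP => ho; lia. Qed.

Definition partner (v : 'I_n) : 'I_n := Ordinal (pv_lt v).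

Lemma G_partner (x y : 'I_n) : matching_graph n x y = (y == partner x).
Proof.
rewrite /matching_graph -!(inj_eq val_inj) /= /pv.
case: ifP => ho; apply/idP/idP => [/andP [h1 /eqP h2] | /eqP h];
  try (apply/eqP; lia); apply/andP; split; apply/eqP; lia.
Qed.

Lemma partnerK (v : 'I_n) : partner (partner v) = v.
Proof.
apply/val_inj => /=; rewrite /pv.
case ho: (odd v); [rewrite (_ : odd v.-1 = false) | rewrite (_ : odd v.+1 = true)]; lia.
Qed.

Lemma partner_neq (v : 'I_n) : (v == partner v) = false.
Proof. apply/negbTE; rewrite -(inj_eq val_inj) /= /pv; case: ifP => ho; apply/eqP; lia. Qed.

Lemma partner_inj : injective partner.
Proof. by move=> x y E; rewrite -(partnerK x) E partnerK. Qed.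

Lemma lower j (c : 'I_n -> 'I_j) :
  H_avoiding_coloring twoK2 (matching_graph n) c -> n <= j * j.-1.
Proof.
move=> [Hp Hav].
pose h v := (c v, c (partner v)).
have hinj : injective h.
  move=> v w E; case: (eqVneq v w) => // nvw.
  move: E; rewrite /h => -[E1 E2].
  case: (eqVneq w (partner v)) => [wp | nwp].
    exfalso; move: (Hp v w); rewrite G_partner wp eqxx -wp -E1 eqxx.
    by move/(_ isT).
  exfalso; apply: (Hav (c v) (c (partner v))).
  pose f (x : 'I_4) : 'I_n :=
    match val x with 0 => v | 1 => partner v | 2 => w | _ => partner w end.
  have a1 : (v == w) = false by apply/negbTE.
  have a2 : (v == partner w) = false.
    apply/negbTE/eqP => e; move/eqP: nwp; apply; by rewrite e partnerK.
  have a3 : (partner v == partner w) = false.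
    apply/negbTE/eqP => /partner_inj e; by rewrite e eqxx in a1.
  have a4 : (partner v == w) = false by rewrite eq_sym; apply/negbTE.
  have b1 : (w == v) = false by rewrite eq_sym.
  have b2 : (partner w == v) = false by rewrite eq_sym.
  have b3 : (partner w == partner v) = false by rewrite eq_sym.
  have b4 : (w == partner v) = false by apply/negbTE.
  have p1 := partner_neq v; have p2 := partner_neq w.
  have q1 : (partner v == v) = false by rewrite eq_sym.
  have q2 : (partner w == w) = false by rewrite eq_sym.
  exists f; split; [|split].
  - move=> x y E; apply: val_inj; move: E.
    case: x => [[|[|[|[|mx]]]] Hx] //; case: y => [[|[|[|[|my]]]] Hy] //;
      rewrite /f /= => /eqP;
      by rewrite ?eqxx ?a1 ?a2 ?a3 ?a4 ?b1 ?b2 ?b3 ?b4 ?p1 ?p2 ?q1 ?q2.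
  - case=> [[|[|[|[|mx]]]] Hx] //; rewrite /f /= ?eqxx ?orbT //.
    + by rewrite -E1 eqxx.
    + by rewrite -E2 eqxx orbT.
  - move=> x y; rewrite G_partner.
    case: x => [[|[|[|[|mx]]]] Hx] //; case: y => [[|[|[|[|my]]]] Hy] //;
      rewrite /f /= ?partnerK;
      by rewrite ?eqxx ?a1 ?a2 ?a3 ?a4 ?b1 ?b2 ?b3 ?b4 ?p1 ?p2 ?q1 ?q2.
have D : #|[set x : 'I_j * 'I_j | x.1 == x.2]| = j.
  have -> : [set x : 'I_j * 'I_j | x.1 == x.2] = [set (a, a) | a : 'I_j].
    apply/setP => -[a b]; rewrite !inE /=; apply/eqP/imsetP => [-> | [a' _ [-> ->]]] //.
    by exists b.
  by rewrite card_imset ?cardsT ?card_ord // => a b [].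
have C := cardsC [set x : 'I_j * 'I_j | x.1 == x.2].
rewrite D card_prod !card_ord in C.
have : #|[set h v | v : 'I_n]| <= #|~: [set x : 'I_j * 'I_j | x.1 == x.2]|.
  apply: subset_leq_card; apply/subsetP => _ /imsetP [v _ ->].
  rewrite !inE /=.
  by apply: Hp; rewrite G_partner eqxx.
rewrite card_imset // ?cardsT card_ord.
rewrite -subn1 mulnBr muln1; lia.
Qed.

Lemma half_partner (v : 'I_n) : (nat_of_ord (partner v))./2 = (nat_of_ord v)./2.
Proof. rewrite /= /pv; case: ifP => ho; lia. Qed.

Lemma odd_partner (v : 'I_n) : odd (nat_of_ord (partner v)) = ~~ odd v.
Proof. rewrite /= /pv; case ho: (odd v) => /=; lia. Qed.

Lemma same_half (x y : 'I_n) : (nat_of_ord x)./2 = (nat_of_ord y)./2 -> y = x \/ y = partner x.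
Proof.
move=> h; case: (eqVneq y x) => [->|nyx]; [by left|right].
by apply/eqP; rewrite -G_partner /matching_graph eq_sym nyx h eqxx.
Qed.

Lemma upper k : 0 < n -> n <= k * k.-1 ->
  exists c : 'I_n -> 'I_k, H_avoiding_coloring twoK2 (matching_graph n) c.
Proof.
move=> n0; case: k => [|[|k]] H; first by lia.
  by lia.
pose T := ('I_k.+2 * 'I_k.+2)%type.
pose Lt := [set x : T | x.1 < x.2].
pose L := enum Lt.
pose x0 : T := (ord0, ord0).
have cardLt : #|Lt| * 2 = k.+2 * k.+1.
  pose E := [set x : T | x.1 == x.2].
  have D : #|E| = k.+2.
    have -> : E = [set (a, a) | a : 'I_k.+2].
      apply/setP => -[a b]; rewrite !inE /=; apply/eqP/imsetP => [-> | [a' _ [-> ->]]] //.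
      by exists b.
    by rewrite card_imset ?cardsT ?card_ord // => a b [].
  have C := cardsC E; rewrite D card_prod !card_ord mulnS in C.
  have I1 : ~: E :&: Lt = Lt.
    apply/setP => -[a b]; rewrite /E /Lt !inE /= -(inj_eq val_inj) /=.
    by case: ltngtP.
  have I2 : ~: E :\: Lt = [set (x.2, x.1) | x in Lt].
    apply/setP => -[a b]; rewrite /E /Lt !inE /=.
    apply/andP/imsetP => [[h1 h2] | [[a' b'] hin [-> ->]]].
      exists (b, a) => //; rewrite inE /=.
      move: h1 h2; rewrite -(inj_eq val_inj) /=; lia.
    rewrite inE /= in hin; split; rewrite -?(inj_eq val_inj) /=; lia.
  have := cardsID Lt (~: E); rewrite I1 I2 card_imset; last first.
    by move=> [x1 x2] [y1 y2] /= [-> ->].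
  lia.
have H' : n <= #|Lt| * 2 by rewrite cardLt.
clear H.
have sizeL : size L = #|Lt| by rewrite cardE.
pose c (v : 'I_n) : 'I_k.+2 :=
  let x := nth x0 L (nat_of_ord v)./2 in if odd v then x.2 else x.1.
have inL (v : 'I_n) : (nat_of_ord v)./2 < size L.
  have := ltn_ord v; rewrite sizeL; lia.
have inLt (v : 'I_n) : (nth x0 L (nat_of_ord v)./2).1 < (nth x0 L (nat_of_ord v)./2).2.
  have := mem_nth x0 (inL v); by rewrite mem_enum inE.
have cpart (v : 'I_n) : c (partner v) =
   let x := nth x0 L (nat_of_ord v)./2 in if odd v then x.1 else x.2.
  by rewrite /c half_partner odd_partner; case: (odd v).
exists c; split.
  move=> v w; rewrite G_partner => /eqP ->; rewrite cpart /c /=.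
  have := inLt v; case: (odd v) => h; rewrite -(inj_eq val_inj) /=; lia.
move=> c1 c2 [f [finj [fS fG]]].
pose o0 : 'I_4 := @Ordinal 4 0 isT.
pose o1 : 'I_4 := @Ordinal 4 1 isT.
pose o2 : 'I_4 := @Ordinal 4 2 isT.
pose o3 : 'I_4 := @Ordinal 4 3 isT.
have e01 : f o1 = partner (f o0) by apply/eqP; rewrite -G_partner fG.
have e23 : f o3 = partner (f o2) by apply/eqP; rewrite -G_partner fG.
have inS (v : 'I_n) : (c v == c1) || (c v == c2) -> (c (partner v) == c1) || (c (partner v) == c2) ->
   let x := nth x0 L (nat_of_ord v)./2 in
   [&& (nat_of_ord x.1 == nat_of_ord c1) || (nat_of_ord x.1 == nat_of_ord c2) & (nat_of_ord x.2 == nat_of_ord c1) || (nat_of_ord x.2 == nat_of_ord c2)].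
  rewrite cpart /c /= -!(inj_eq val_inj) /=; case: (odd v) => /= -> ->; by [].
have Ha := inS (f o0) (fS o0); rewrite -e01 in Ha; have /andP [Ha1 Ha2] := Ha (fS o1).
have Hd := inS (f o2) (fS o2); rewrite -e23 in Hd; have /andP [Hd1 Hd2] := Hd (fS o3).
have la := inLt (f o0); have ld := inLt (f o2).
have E : nth x0 L (nat_of_ord (f o0))./2 = nth x0 L (nat_of_ord (f o2))./2.
  move: Ha1 Ha2 Hd1 Hd2 la ld.
  case: (nth x0 L (nat_of_ord (f o0))./2) => [a1 a2]; case: (nth x0 L (nat_of_ord (f o2))./2) => [d1 d2] /= *.
  have h1 : a1 = d1 by apply/val_inj => /=; lia.
  have h2 : a2 = d2 by apply/val_inj => /=; lia.
  by rewrite h1 h2.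
move/eqP: E; rewrite nth_uniq ?inL ?enum_uniq // => /eqP /same_half [] h.
  by move/finj: h.
by move: h; rewrite -e01 => /finj.
Qed.

End M.

Local Open Scope ring_scope.
Lemma aux1 (R : realType) (s k n : R) : 0 <= s -> s ^+ 2 = n + 1/4 -> (k+1)*k < n -> 0 <= k -> k + 1 < s + 1/2.
Proof. move=> *; nra. Qed.
Lemma aux2 (R : realType) (s k n : R) : 0 <= s -> s ^+ 2 = n + 1/4 -> n <= (k+2)*(k+1) -> 0 <= k -> s + 1/2 <= k + 2.
Proof. move=> *; nra. Qed.

Lemma ceil_part (R : realType) (n k : nat) :
  (n <= k.+2 * k.+1)%N -> (k.+1 * k < n)%N ->
  ((k.+2)%:Z = Num.ceil (Num.sqrt (n%:R + 1 / 4 : R) + 1 / 2)).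
Proof.
move=> H1 H2.
have H1' : (n%:R <= (k%:R + 2) * (k%:R + 1) :> R).
  by rewrite -[2]/(2%:R) -[1]/(1%:R) -!natrD -natrM ler_nat addn2 addn1.
have H2' : ((k%:R + 1) * k%:R < n%:R :> R).
  by rewrite -[1]/(1%:R) -natrD -natrM ltr_nat addn1.
have k0 : (0 <= k%:R :> R) by [].
have n0 : (0 <= n%:R :> R) by [].
have a0 : (0 <= n%:R + 1/4 :> R) by lra.
have s0 := sqrtr_ge0 (n%:R + 1/4 : R).
have s2 := sqr_sqrtr a0.
apply/eqP; rewrite eq_le; apply/andP; split.
- have -> : Posz k.+2 = (Posz k.+1 + 1) by rewrite -addn1 PoszD.
  rewrite lezD1 ceil_gt_int.
  rewrite -[((k.+1)%:Z)%:~R]/(k.+1%:R : R) -addn1 natrD.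
  exact: aux1 s0 s2 H2' k0.
- rewrite ceil_le_int -[((k.+2)%:Z)%:~R]/(k.+2%:R : R).
  have -> : (k.+2%:R : R) = k%:R + 2 by rewrite -addn2 natrD.
  exact: aux2 s0 s2 H1' k0.
Qed.

Local Close Scope ring_scope.

Theorem corollary3 (R : realType) (n : nat) :
  0 < n -> ~~ odd n ->
  exists k : nat,
    chi_H_is twoK2 (matching_graph n) k /\
    (k%:Z = Num.ceil (Num.sqrt (n%:R + 1 / 4 : R) + 1 / 2))%R.
Proof.
move=> n0 Hn.
have ex : exists k, (n <= k * k.-1)%N by exists n.+1; rewrite /= mulSn leq_addr.
case: (ex_minnP ex) => k Hk Hmin.
exists k; split.
  split; first exact: (@upper n Hn k n0 Hk).
  by move=> j [c Hc]; apply: Hmin; exact: (@lower n Hn j c Hc).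
move: Hk Hmin; case: k => [|[|k]] Hk Hmin.
- by exfalso; move: Hk; rewrite mul0n leqn0 => /eqP e; rewrite e in n0.
- by exfalso; move: Hk; rewrite /= muln0 leqn0 => /eqP e; rewrite e in n0.
apply: ceil_part => //.
rewrite ltnNge; apply/negP => h.
by have := Hmin k.+1 h; rewrite ltnn.
Qed.
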